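(* Let $C=\mathbb{S}^1\times\mathbb{R}$ be the flat Euclidean cylinder, with $\mathbb{S}^1=\mathbb{R}/\mathbb{Z}$, and let $f:C\to C$ be a geodesic-preserving bijection. Then $f$ is a composition of an isometry of $C$, an affine map in the $\mathbb{R}$-coordinate, and a twisting map.
   Context: $C$ carries the product of the standard flat metric on $\mathbb{R}/\mathbb{Z}$ and the standard metric on $\mathbb{R}$. A geodesic is the image of a locally isometric immersion of the whole real line; a bijection (not assumed continuous) is geodesic-preserving if it maps every geodesic onto a geodesic as a set. An affine map in the $\mathbb{R}$-coordinate is $(r_1,r_2)\mapsto(r_1,ar_2+b)$ with $a\neq 0$. For $\alpha\in\mathbb{R}$ the twisting map is $t_\alpha(r_1,r_2)=(r_1+\alpha r_2,\,r_2)$. *)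

(* Defs.v *)
From Stdlib Require Import Reals Lra.
Open Scope R_scope.

(* The flat cylinder C = (R/Z) x R, points represented by (r1, r2) with
   r1 the canonical representative in [0,1). *)
Definition Cyl : Type := { p : R * R | 0 <= fst p < 1 }.

Lemma frac_part_range (x : R) : 0 <= fst (frac_part x, 0) < 1.
Proof. simpl; destruct (base_fp x); lra. Qed.

Definition mkC (r1 r2 : R) : Cyl :=
  exist (fun p : R * R => 0 <= fst p < 1) (frac_part r1, r2)
        (frac_part_range r1).

Definition c1 (p : Cyl) : R := fst (proj1_sig p).
Definition c2 (p : Cyl) : R := snd (proj1_sig p).

Definition distS1 (a b : R) : R :=
  Rmin (frac_part (a - b)) (1 - frac_part (a - b)).

Definition distC (p q : Cyl) : R :=
  sqrt (distS1 (c1 p) (c1 q) ^ 2 + (c2 p - c2 q) ^ 2).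

Definition locally_isometric (g : R -> Cyl) : Prop :=
  forall t : R, exists eps : R, 0 < eps /\
    forall s s' : R, Rabs (s - t) < eps -> Rabs (s' - t) < eps ->
      distC (g s) (g s') = Rabs (s - s').

Definition geodesic (G : Cyl -> Prop) : Prop :=
  exists g : R -> Cyl, locally_isometric g /\
    forall p : Cyl, G p <-> exists t : R, g t = p.

Definition image (f : Cyl -> Cyl) (G : Cyl -> Prop) : Cyl -> Prop :=
  fun q => exists p, G p /\ f p = q.

Definition bijectiveC (f : Cyl -> Cyl) : Prop :=
  exists g : Cyl -> Cyl, (forall x, g (f x) = x) /\ (forall y, f (g y) = y).

Definition geodesic_preserving (f : Cyl -> Cyl) : Prop :=
  forall G : Cyl -> Prop, geodesic G -> geodesic (image f G).

Definition isometryC (g : Cyl -> Cyl) : Prop :=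
  bijectiveC g /\ forall p q, distC (g p) (g q) = distC p q.

Definition affineC (a b : R) (p : Cyl) : Cyl := mkC (c1 p) (a * c2 p + b).

Definition twist (alpha : R) (p : Cyl) : Cyl := mkC (c1 p + alpha * c2 p) (c2 p).

(* Main.v *)
From Pilot Require Import Defs.
From Stdlib Require Import Reals.
From Stdlib Require Import Lra Lia ZArith ProofIrrelevance Classical ClassicalEpsilon.
Import Pilot.Defs.
Open Scope R_scope.

Definition cong (x y : R) : Prop := exists n : Z, x - y = IZR n.

Lemma cong_refl x : cong x x.
Proof. exists 0%Z; simpl; ring. Qed.
Lemma cong_sym x y : cong x y -> cong y x.
Proof. intros [n H]; exists (- n)%Z; rewrite opp_IZR; lra. Qed.
Lemma cong_trans x y z : cong x y -> cong y z -> cong x z.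
Proof. intros [n H] [m H']; exists (n + m)%Z; rewrite plus_IZR; lra. Qed.
Lemma cong_add x y x' y' : cong x y -> cong x' y' -> cong (x + x') (y + y').
Proof. intros [n H] [m H']; exists (n + m)%Z; rewrite plus_IZR; lra. Qed.
Lemma cong_opp x y : cong x y -> cong (- x) (- y).
Proof. intros [n H]; exists (- n)%Z; rewrite opp_IZR; lra. Qed.
Lemma cong_sub x y x' y' : cong x y -> cong x' y' -> cong (x - x') (y - y').
Proof. intros; apply cong_add; auto; apply cong_opp; auto. Qed.
Lemma cong_zmul (z : Z) x y : cong x y -> cong (IZR z * x) (IZR z * y).
Proof. intros [n H]; exists (z * n)%Z; rewrite mult_IZR; rewrite <- H; ring. Qed.
Lemma cong_int (n : Z) x : cong (x + IZR n) x.
Proof. exists n; ring. Qed.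
Lemma cong_eq x y : x = y -> cong x y.
Proof. intros ->; apply cong_refl. Qed.

Lemma IZR_small (n : Z) : -1 < IZR n < 1 -> n = 0%Z.
Proof.
  intros [H1 H2]. apply lt_IZR in H2. replace (-1) with (IZR (-1)) in H1 by reflexivity.
  apply lt_IZR in H1. lia.
Qed.

Lemma cong_small x y : cong x y -> Rabs (x - y) < 1 -> x = y.
Proof.
  intros [n H] Ha. rewrite H in Ha. apply Rabs_def2 in Ha.
  assert (n = 0%Z) by (apply IZR_small; lra). subst. simpl in H. lra.
Qed.

Lemma uniq01 r r' : 0 <= r < 1 -> 0 <= r' < 1 -> cong r r' -> r = r'.
Proof. intros H H' Hc. apply cong_small; auto. apply Rabs_def1; lra. Qed.

Lemma frac_range x : 0 <= frac_part x < 1.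
Proof. destruct (base_fp x); lra. Qed.
Lemma frac_cong_self x : cong (frac_part x) x.
Proof. exists (- Int_part x)%Z. unfold frac_part. rewrite opp_IZR. ring. Qed.
Lemma frac_cong x y : cong x y -> frac_part x = frac_part y.
Proof.
  intro H. apply uniq01; try apply frac_range.
  eapply cong_trans; [apply frac_cong_self|]. eapply cong_trans; [apply H|].
  apply cong_sym, frac_cong_self.
Qed.

Lemma c1_range p : 0 <= c1 p < 1.
Proof. destruct p as [[x y] H]; exact H. Qed.
Lemma c1_mkC x y : c1 (mkC x y) = frac_part x.
Proof. reflexivity. Qed.
Lemma c2_mkC x y : c2 (mkC x y) = y.
Proof. reflexivity. Qed.

Lemma Cyl_ext p q : c1 p = c1 q -> c2 p = c2 q -> p = q.
Proof.
  destruct p as [[x y] H], q as [[x' y'] H']; unfold c1, c2; simpl; intros -> ->.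
  f_equal. apply proof_irrelevance.
Qed.

Lemma frac_of_01 r : 0 <= r < 1 -> frac_part r = r.
Proof. intro H. apply uniq01; auto. apply frac_range. apply frac_cong_self. Qed.

Lemma mkC_eta p : mkC (c1 p) (c2 p) = p.
Proof. apply Cyl_ext; rewrite ?c1_mkC, ?c2_mkC; auto. apply frac_of_01, c1_range. Qed.

Lemma eq_mkC p x y : cong (c1 p) x -> c2 p = y -> p = mkC x y.
Proof.
  intros H1 H2. apply Cyl_ext; rewrite ?c1_mkC, ?c2_mkC; auto.
  apply uniq01; [apply c1_range|apply frac_range|].
  eapply cong_trans; [apply H1|apply cong_sym, frac_cong_self].
Qed.

Lemma mkC_eq x y x' y' : cong x x' -> y = y' -> mkC x y = mkC x' y'.
Proof. intros. apply eq_mkC; rewrite ?c1_mkC, ?c2_mkC; auto.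
  eapply cong_trans; [apply frac_cong_self| auto]. Qed.

Lemma c1_cong_eq p q : cong (c1 p) (c1 q) -> c1 p = c1 q.
Proof. intro; apply uniq01; auto; apply c1_range. Qed.

Lemma c1_mkC_cong x y : cong (c1 (mkC x y)) x.
Proof. rewrite c1_mkC; apply frac_cong_self. Qed.

Definition rep (x : R) : R := frac_part (x + /2) - /2.

Lemma rep_range x : - / 2 <= rep x < / 2.
Proof. unfold rep. destruct (frac_range (x + /2)). lra. Qed.
Lemma rep_cong_self x : cong (rep x) x.
Proof.
  unfold rep. destruct (frac_cong_self (x + /2)) as [n H]. exists n. lra.
Qed.
Lemma rep_uniq d x : - / 2 <= d < / 2 -> cong d x -> rep x = d.
Proof.
  intros Hd Hc. apply cong_small.
  - eapply cong_trans; [apply rep_cong_self| apply cong_sym; auto].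
  - pose proof (rep_range x). apply Rabs_def1; lra.
Qed.
Lemma rep_cong x y : cong x y -> rep x = rep y.
Proof. intro H. apply rep_uniq. apply rep_range. eapply cong_trans; [apply rep_cong_self|auto]. apply cong_sym; auto. Qed.

Lemma distS1_rep a b : distS1 a b = Rabs (rep (a - b)).
Proof.
  unfold distS1. set (r := rep (a - b)). pose proof (rep_range (a - b)) as Hr. fold r in Hr.
  assert (Hc : cong r (a - b)) by apply rep_cong_self.
  destruct (Rle_or_lt 0 r) as [H|H].
  - assert (frac_part (a - b) = r).
    { apply uniq01; [apply frac_range|lra|]. eapply cong_trans; [apply frac_cong_self|apply cong_sym; auto]. }
    rewrite H0, Rabs_right by lra. unfold Rmin; destruct Rle_dec; lra.
  - assert (frac_part (a - b) = r + 1).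
    { apply uniq01; [apply frac_range|lra|]. eapply cong_trans; [apply frac_cong_self|].
      apply cong_sym. eapply cong_trans; [apply (cong_int 1)| auto]. }
    rewrite H0, Rabs_left by lra. unfold Rmin; destruct Rle_dec; lra.
Qed.

Lemma distC_rep p q : distC p q = sqrt (rep (c1 p - c1 q) ^ 2 + (c2 p - c2 q) ^ 2).
Proof. unfold distC. rewrite distS1_rep. rewrite <- (pow2_abs (rep _)). reflexivity. Qed.

Lemma Rabs_rep_opp x : Rabs (rep (- x)) = Rabs (rep x).
Proof.
  pose proof (rep_range x). pose proof (rep_cong_self x) as Hc.
  destruct (Req_dec (rep x) (- / 2)) as [E|E].
  - assert (rep (- x) = - / 2).
    { apply rep_uniq; [lra|]. destruct Hc as [n Hn]. exists (- n - 1)%Z.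
      rewrite minus_IZR, opp_IZR. simpl. lra. }
    rewrite H0, E; reflexivity.
  - assert (rep (- x) = - rep x).
    { apply rep_uniq; [lra|]. apply cong_opp; auto. }
    rewrite H0, Rabs_Ropp; reflexivity.
Qed.

Definition line (a b u1 u2 t : R) : Cyl := mkC (a + u1 * t) (b + u2 * t).

Lemma sqrt_sq_abs d : sqrt (d ^ 2) = Rabs d.
Proof. rewrite <- sqrt_Rsqr_abs. f_equal. unfold Rsqr; ring. Qed.

Lemma line_li a b u1 u2 : u1 ^ 2 + u2 ^ 2 = 1 -> locally_isometric (line a b u1 u2).
Proof.
  intros Hu t. exists (/4). split; [lra|]. intros s s' Hs Hs'.
  rewrite distC_rep. unfold line. rewrite !c1_mkC, !c2_mkC.
  assert (Hd : Rabs (s - s') < /2).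
  { apply Rabs_def2 in Hs; apply Rabs_def2 in Hs'. apply Rabs_def1; lra. }
  assert (Hu1 : Rabs u1 <= 1).
  { apply Rabs_le. nra. }
  assert (Hb : Rabs (u1 * (s - s')) < /2).
  { rewrite Rabs_mult. assert (0 <= Rabs (s - s')) by apply Rabs_pos.
    assert (0 <= Rabs u1) by apply Rabs_pos. nra. }
  rewrite (rep_uniq (u1 * (s - s'))).
  - replace ((u1 * (s - s')) ^ 2 + (b + u2 * s - (b + u2 * s')) ^ 2) with ((s - s') ^ 2).
    + apply sqrt_sq_abs.
    + replace ((b + u2 * s - (b + u2 * s'))) with (u2 * (s - s')) by ring.
      replace ((s - s') ^ 2) with ((u1 ^ 2 + u2 ^ 2) * (s - s') ^ 2) by (rewrite Hu; ring). ring.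
  - apply Rabs_def2 in Hb. lra.
  - apply cong_sym. eapply cong_trans.
    + apply cong_sub; apply frac_cong_self.
    + apply cong_eq; ring.
Qed.

Lemma sqrt_eq_sq z w : 0 <= z -> sqrt z = Rabs w -> z = w ^ 2.
Proof.
  intros Hz H. rewrite <- (sqrt_sqrt z Hz). rewrite H. rewrite <- pow2_abs. simpl; ring.
Qed.

Lemma local_line g : locally_isometric g -> forall t, exists eps, 0 < eps /\
  exists u1 u2, u1 ^ 2 + u2 ^ 2 = 1 /\
  forall s, Rabs (s - t) < eps -> g s = line (c1 (g t) - u1 * t) (c2 (g t) - u2 * t) u1 u2 s.
Proof.
  intros Hg t. destruct (Hg t) as [eps0 [Heps0 Hd]].
  set (e := Rmin eps0 (/8)).
  assert (He : 0 < e) by (unfold e; apply Rmin_glb_lt; lra).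
  assert (He1 : e <= eps0) by apply Rmin_l.
  assert (He2 : e <= /8) by apply Rmin_r.
  set (X := fun s => rep (c1 (g s) - c1 (g t))).
  set (Y := fun s => c2 (g s) - c2 (g t)).
  assert (F1 : forall s, Rabs (s - t) < e -> X s ^ 2 + Y s ^ 2 = (s - t) ^ 2).
  { intros s Hs. assert (H := Hd s t ltac:(lra) ltac:(rewrite Rminus_diag, Rabs_R0; lra)).
    rewrite distC_rep in H. apply sqrt_eq_sq in H; [exact H|].
    apply Rplus_le_le_0_compat; apply pow2_ge_0. }
  assert (FX : forall s, Rabs (s - t) < e -> Rabs (X s) < /8).
  { intros s Hs. specialize (F1 s Hs). apply Rabs_def2 in Hs.
    assert (Y s ^ 2 >= 0) by (apply Rle_ge, pow2_ge_0).
    apply Rabs_def1; nra. }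
  assert (F2 : forall s s', Rabs (s - t) < e -> Rabs (s' - t) < e ->
            (X s - X s') ^ 2 + (Y s - Y s') ^ 2 = (s - s') ^ 2).
  { intros s s' Hs Hs'. assert (H := Hd s s' ltac:(lra) ltac:(lra)).
    rewrite distC_rep in H. apply sqrt_eq_sq in H;
      [|apply Rplus_le_le_0_compat; apply pow2_ge_0].
    rewrite <- H. replace (Y s - Y s') with (c2 (g s) - c2 (g s')) by (unfold Y; ring).
    f_equal. f_equal. symmetry. apply rep_uniq.
    - pose proof (FX s Hs) as A; pose proof (FX s' Hs') as B.
      apply Rabs_def2 in A; apply Rabs_def2 in B. lra.
    - unfold X. eapply cong_trans. apply cong_sub; apply rep_cong_self.
      apply cong_eq; ring. }
  set (h := e / 2).
  assert (Hh : 0 < h) by (unfold h; lra).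
  assert (Hs0 : Rabs (t + h - t) < e) by (replace (t + h - t) with h by ring; rewrite Rabs_right; unfold h; lra).
  set (u1 := X (t + h) / h). set (u2 := Y (t + h) / h).
  assert (Hu : u1 ^ 2 + u2 ^ 2 = 1).
  { pose proof (F1 _ Hs0) as A. replace (t + h - t) with h in A by ring.
    unfold u1, u2. field_simplify; [|lra]. rewrite A. field. lra. }
  exists e. split; auto. exists u1, u2. split; auto.
  intros s Hs.
  assert (Hdot : X s * u1 + Y s * u2 = s - t).
  { pose proof (F1 _ Hs) as A. pose proof (F2 _ _ Hs Hs0) as B.
    pose proof (F1 _ Hs0) as C.
    replace (X (t + h)) with (h * u1) in B by (unfold u1; field; lra).
    replace (Y (t + h)) with (h * u2) in B by (unfold u2; field; lra).
    apply (Rmult_eq_reg_l (2 * h)); [|lra].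
    replace (2 * h * (X s * u1 + Y s * u2)) with
      ((X s ^ 2 + Y s ^ 2) + h ^ 2 * (u1 ^ 2 + u2 ^ 2) - ((X s - h * u1) ^ 2 + (Y s - h * u2) ^ 2)) by ring.
    rewrite A, B, Hu. ring. }
  assert (Hz : (X s - (s - t) * u1) ^ 2 + (Y s - (s - t) * u2) ^ 2 = 0).
  { replace ((X s - (s - t) * u1) ^ 2 + (Y s - (s - t) * u2) ^ 2) with
      ((X s ^ 2 + Y s ^ 2) - 2 * (s - t) * (X s * u1 + Y s * u2) + (s - t) ^ 2 * (u1 ^ 2 + u2 ^ 2)) by ring.
    rewrite F1 by auto. rewrite Hdot, Hu. ring. }
  assert (Ex : X s = (s - t) * u1).
  { pose proof (pow2_ge_0 (X s - (s - t) * u1)). pose proof (pow2_ge_0 (Y s - (s - t) * u2)).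
    assert ((X s - (s - t) * u1) ^ 2 = 0) by lra. nra. }
  assert (Ey : Y s = (s - t) * u2).
  { pose proof (pow2_ge_0 (X s - (s - t) * u1)). pose proof (pow2_ge_0 (Y s - (s - t) * u2)).
    assert ((Y s - (s - t) * u2) ^ 2 = 0) by lra. nra. }
  unfold line. apply eq_mkC.
  - apply cong_sym. eapply cong_trans with (c1 (g t) + X s).
    + rewrite Ex. apply cong_eq; ring.
    + unfold X. eapply cong_trans. apply cong_add. apply cong_refl. apply rep_cong_self.
      apply cong_eq; ring.
  - unfold Y in Ey. lra.
Qed.

Lemma lines_agree a b u1 u2 a' b' v1 v2 al be :
  al < be -> (forall r, al < r < be -> line a b u1 u2 r = line a' b' v1 v2 r) ->
  forall r, line a b u1 u2 r = line a' b' v1 v2 r.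
Proof.
  intros Hab H.
  set (r0 := (al + be) / 2).
  set (h := Rmin ((be - al) / 4) (/ (2 * (Rabs (u1 - v1) + 1)))).
  assert (Hpos : 0 < Rabs (u1 - v1) + 1) by (pose proof (Rabs_pos (u1 - v1)); lra).
  assert (Hh : 0 < h).
  { unfold h. apply Rmin_glb_lt; [lra|]. apply Rinv_0_lt_compat; lra. }
  assert (Hh1 : h <= (be - al) / 4) by apply Rmin_l.
  assert (Hh2 : h <= / (2 * (Rabs (u1 - v1) + 1))) by apply Rmin_r.
  assert (E0 := H r0 ltac:(unfold r0; lra)).
  assert (E1 := H (r0 + h) ltac:(unfold r0 in *; lra)).
  unfold line in E0, E1.
  assert (A0 := f_equal c1 E0). assert (A1 := f_equal c1 E1).
  assert (B0 := f_equal c2 E0). assert (B1 := f_equal c2 E1).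
  rewrite !c1_mkC in A0, A1. rewrite !c2_mkC in B0, B1.
  assert (Hu2 : u2 = v2).
  { apply (Rmult_eq_reg_r h); [|lra]. nra. }
  subst v2. assert (Hb : b = b') by lra. subst b'.
  assert (C0 : cong (a + u1 * r0) (a' + v1 * r0)).
  { eapply cong_trans; [apply cong_sym, frac_cong_self|]. rewrite A0. apply frac_cong_self. }
  assert (C1 : cong (a + u1 * (r0 + h)) (a' + v1 * (r0 + h))).
  { eapply cong_trans; [apply cong_sym, frac_cong_self|]. rewrite A1. apply frac_cong_self. }
  assert (Hu1 : u1 = v1).
  { assert (D : cong ((u1 - v1) * h) 0).
    { apply cong_sym in C0. pose proof (cong_sub _ _ _ _ C1 (cong_sym _ _ C0)) as D.
      destruct D as [n Hn]. exists n. rewrite <- Hn. ring. }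
    assert (Habs : Rabs ((u1 - v1) * h - 0) < 1).
    { rewrite Rminus_0_r, Rabs_mult, (Rabs_right h) by lra.
      assert (h * (2 * (Rabs (u1 - v1) + 1)) <= 1).
      { pose proof (Rmult_le_compat_r (2 * (Rabs (u1 - v1) + 1)) _ _ ltac:(lra) Hh2) as Q.
        rewrite Rinv_l in Q by lra. exact Q. }
      pose proof (Rabs_pos (u1 - v1)). nra. }
    pose proof (cong_small _ _ D Habs). nra. }
  subst v1.
  assert (Ca : cong a a').
  { pose proof (cong_sub _ _ _ _ C0 (cong_refl (u1 * r0))) as D.
    replace (a + u1 * r0 - u1 * r0) with a in D by ring.
    replace (a' + u1 * r0 - u1 * r0) with a' in D by ring. exact D. }
  intro r. unfold line. apply mkC_eq; [|reflexivity].
  apply cong_add; [auto|apply cong_refl].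
Qed.

Lemma forward g a b u1 u2 d :
  locally_isometric g -> 0 < d -> (forall r, Rabs r < d -> g r = line a b u1 u2 r) ->
  forall r, 0 <= r -> g r = line a b u1 u2 r.
Proof.
  intros Hg Hd Hloc.
  destruct (classic (forall r, 0 <= r -> g r = line a b u1 u2 r)) as [Hall|Hn]; auto.
  exfalso.
  apply not_all_ex_not in Hn. destruct Hn as [r0 Hr0].
  apply imply_to_and in Hr0. destruct Hr0 as [Hr0 Hbad].
  set (E := fun T => 0 <= T /\ forall r, 0 <= r <= T -> g r = line a b u1 u2 r).
  assert (Hbound : bound E).
  { exists r0. intros T [HT HT']. destruct (Rle_or_lt T r0); auto.
    exfalso. apply Hbad. apply HT'. lra. }
  assert (Hne : exists T, E T).
  { exists 0. split; [lra|]. intros r Hr. apply Hloc. rewrite Rabs_right; lra. }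
  destruct (completeness E Hbound Hne) as [M [HM1 HM2]].
  assert (Hd2 : E (d / 2)).
  { split; [lra|]. intros r Hr. apply Hloc. rewrite Rabs_right; lra. }
  assert (HMd : d / 2 <= M) by (apply HM1; auto).
  assert (Hbelow : forall r, 0 <= r < M -> g r = line a b u1 u2 r).
  { intros r Hr. destruct (classic (exists T, E T /\ r <= T)) as [[T [[_ HT] HrT]]|HnT].
    - apply HT; lra.
    - exfalso. assert (M <= r).
      { apply HM2. intros T HT. destruct (Rle_or_lt T r); auto.
        exfalso; apply HnT; exists T; split; auto; lra. }
      lra. }
  destruct (local_line g Hg M) as [eps [Heps [v1 [v2 [Hv Hl]]]]].
  set (al := Rmax 0 (M - eps)).
  assert (Hal : al < M) by (unfold al; apply Rmax_lub_lt; lra).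
  assert (Hag := lines_agree a b u1 u2 (c1 (g M) - v1 * M) (c2 (g M) - v2 * M) v1 v2 al M Hal).
  assert (Hag' : forall r, line a b u1 u2 r =
             line (c1 (g M) - v1 * M) (c2 (g M) - v2 * M) v1 v2 r).
  { apply Hag. intros r Hr. assert (0 <= r) by (pose proof (Rmax_l 0 (M - eps)); fold al in H; lra).
    assert (M - eps <= al) by apply Rmax_r.
    rewrite <- Hbelow by lra. apply Hl. apply Rabs_def1; lra. }
  assert (HE : E (M + eps / 2)).
  { split; [lra|]. intros r Hr. destruct (Rlt_or_le r M).
    - apply Hbelow; lra.
    - rewrite Hag'. apply Hl. apply Rabs_def1; lra. }
  specialize (HM1 _ HE). lra.
Qed.

Lemma geodesic_line g : locally_isometric g ->
  exists a b u1 u2, u1 ^ 2 + u2 ^ 2 = 1 /\ forall r, g r = line a b u1 u2 r.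
Proof.
  intros Hg. destruct (local_line g Hg 0) as [eps [Heps [u1 [u2 [Hu Hl]]]]].
  set (a := c1 (g 0) - u1 * 0). set (b := c2 (g 0) - u2 * 0).
  exists a, b, u1, u2. split; auto.
  assert (Hl' : forall r, Rabs r < eps -> g r = line a b u1 u2 r).
  { intros r Hr. apply Hl. rewrite Rminus_0_r; auto. }
  intro r. destruct (Rle_or_lt 0 r) as [Hr|Hr].
  - apply (forward g a b u1 u2 eps Hg Heps Hl' r Hr).
  - set (g' := fun s => g (- s)).
    assert (Hg' : locally_isometric g').
    { intro t. destruct (Hg (- t)) as [e [He He']]. exists e; split; auto.
      intros s s' Hs Hs'. unfold g'. rewrite He'.
      - replace (- s - - s') with (- (s - s')) by ring; apply Rabs_Ropp.
      - replace (- s - - t) with (- (s - t)) by ring; rewrite Rabs_Ropp; auto.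
      - replace (- s' - - t) with (- (s' - t)) by ring; rewrite Rabs_Ropp; auto. }
    assert (Hneg : forall s, line a b u1 u2 (- s) = line a b (- u1) (- u2) s).
    { intro s. unfold line. f_equal; ring. }
    assert (Hl'' : forall s, Rabs s < eps -> g' s = line a b (- u1) (- u2) s).
    { intros s Hs. unfold g'. rewrite <- Hneg. apply Hl'. rewrite Rabs_Ropp; auto. }
    pose proof (forward g' a b (- u1) (- u2) eps Hg' Heps Hl'' (- r) ltac:(lra)) as F.
    unfold g' in F. rewrite Ropp_involutive in F. rewrite F, <- Hneg, Ropp_involutive. reflexivity.
Qed.

Definition Circle (y0 : R) (p : Cyl) : Prop := c2 p = y0.
Definition Helix (k c : R) (p : Cyl) : Prop := cong (c1 p) (c + k * c2 p).

Definition isCircle (G : Cyl -> Prop) := exists y0, forall p, G p <-> Circle y0 p.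
Definition isHelix (G : Cyl -> Prop) := exists k c, forall p, G p <-> Helix k c p.

Lemma geo_class G : geodesic G -> isCircle G \/ isHelix G.
Proof.
  intros [g [Hg HG]]. destruct (geodesic_line g Hg) as [a [b [u1 [u2 [Hu Hl]]]]].
  destruct (Req_dec u2 0) as [H0|H0].
  - left. exists b. intro p. rewrite HG. unfold Circle. split.
    + intros [t Ht]. subst p. rewrite Hl. unfold line. rewrite c2_mkC. subst; ring.
    + intro Hp. assert (u1 <> 0) by (intro; subst; lra).
      exists ((c1 p - a) / u1). rewrite Hl. unfold line. symmetry. apply eq_mkC.
      * apply cong_eq. field. auto.
      * subst; ring.
  - right. exists (u1 / u2), (a - u1 / u2 * b). intro p. rewrite HG. unfold Helix. split.
    + intros [t Ht]. subst p. rewrite Hl. unfold line. rewrite c2_mkC.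
      eapply cong_trans. apply c1_mkC_cong. apply cong_eq. field. auto.
    + intro Hp. exists ((c2 p - b) / u2). rewrite Hl. unfold line. symmetry. apply eq_mkC.
      * eapply cong_trans. apply Hp. apply cong_eq. field. auto.
      * field. auto.
Qed.

Lemma circle_geo y0 : geodesic (Circle y0).
Proof.
  exists (line 0 y0 1 0). split. apply line_li; ring.
  intro p. unfold Circle. split.
  - intro Hp. exists (c1 p). unfold line. symmetry. apply eq_mkC. apply cong_eq; ring. lra.
  - intros [t <-]. unfold line. rewrite c2_mkC. ring.
Qed.

Lemma helix_geo k c : geodesic (Helix k c).
Proof.
  set (s := / sqrt (1 + k ^ 2)).
  assert (Hq : 0 < sqrt (1 + k ^ 2)) by (apply sqrt_lt_R0; nra).
  assert (Hs : 0 < s) by (apply Rinv_0_lt_compat; auto).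
  assert (Hs2 : s ^ 2 * (1 + k ^ 2) = 1).
  { unfold s. rewrite pow_inv. rewrite <- Rsqr_pow2, Rsqr_sqrt by nra. field. nra. }
  exists (line c 0 (k * s) s). split. apply line_li. nra.
  intro p. unfold Helix. split.
  - intro Hp. exists (c2 p / s). unfold line. symmetry. apply eq_mkC.
    + eapply cong_trans. apply Hp. apply cong_eq. field. lra.
    + field. lra.
  - intros [t <-]. unfold line. rewrite c2_mkC. eapply cong_trans. apply c1_mkC_cong.
    apply cong_eq; ring.
Qed.

Lemma not_cong_small x : 0 < Rabs x < 1 -> ~ cong x 0.
Proof. intros [H1 H2] H. apply cong_small in H. subst. rewrite Rabs_R0 in H1; lra. rewrite Rminus_0_r; auto. Qed.

Lemma not_cong_half : ~ cong (/2) 0.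
Proof. apply not_cong_small. rewrite Rabs_right; lra. Qed.

Lemma helix_level_uniq k c p q : Helix k c p -> Helix k c q -> c2 p = c2 q -> p = q.
Proof.
  unfold Helix. intros Hp Hq He. apply Cyl_ext; auto. apply c1_cong_eq.
  eapply cong_trans. apply Hp. rewrite He. apply cong_sym; auto.
Qed.

Lemma helix_meet2 k c k' c' : k <> k' ->
  exists p q, p <> q /\ Helix k c p /\ Helix k' c' p /\ Helix k c q /\ Helix k' c' q.
Proof.
  intro Hk. set (y := (c' - c) / (k - k')). set (y' := y + / (k - k')).
  assert (Hkk : k - k' <> 0) by lra.
  exists (mkC (c + k * y) y), (mkC (c + k * y') y'). unfold Helix. rewrite !c2_mkC.
  split; [|split; [|split; [|split]]].
  - intro E. apply (f_equal c2) in E. rewrite !c2_mkC in E. unfold y' in E.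
    assert (/ (k - k') <> 0) by (apply Rinv_neq_0_compat; auto). lra.
  - apply c1_mkC_cong.
  - eapply cong_trans. apply c1_mkC_cong. apply cong_eq. unfold y. field. auto.
  - apply c1_mkC_cong.
  - eapply cong_trans. apply c1_mkC_cong. exists 1%Z. unfold y', y. simpl. field. auto.
Qed.

Lemma helix_same k c c' p : Helix k c p -> Helix k c' p -> forall q, Helix k c q <-> Helix k c' q.
Proof.
  unfold Helix. intros H1 H2.
  assert (Hc : cong c c').
  { pose proof (cong_trans _ _ _ (cong_sym _ _ H1) H2) as D.
    pose proof (cong_sub _ _ _ _ D (cong_refl (k * c2 p))) as D'.
    destruct D' as [n Hn]; exists n; rewrite <- Hn; ring. }
  intro q; split; intro H; eapply cong_trans; try apply H; apply cong_add; auto;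
    try apply cong_refl; apply cong_sym; auto.
Qed.

Definition injf (f : Cyl -> Cyl) := forall x y, f x = f y -> x = y.

Lemma image_inv f G a : injf f -> image f G (f a) -> G a.
Proof. intros Hi [q [Hq E]]. apply Hi in E. subst; auto. Qed.

Lemma image_in f (G : Cyl -> Prop) a : G a -> image f G (f a).
Proof. intro; exists a; auto. Qed.

Section Img.
Variable f : Cyl -> Cyl.
Hypothesis Hinj : injf f.
Hypothesis Hgp : geodesic_preserving f.

Lemma claim1 k c : ~ isCircle (image f (Helix k c)).
Proof.
  intros [Y HY].
  destruct (helix_meet2 k c (k + 1) c ltac:(lra)) as [p [q [Hpq [Hp1 [Hp2 [Hq1 Hq2]]]]]].
  assert (Fp : c2 (f p) = Y) by (apply HY, image_in; auto).
  assert (Fq : c2 (f q) = Y) by (apply HY, image_in; auto).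
  destruct (geo_class _ (Hgp _ (helix_geo (k + 1) c))) as [[Y' HY']|[m [d Hmd]]].
  - assert (Y' = Y) by (rewrite <- Fp; symmetry; apply HY', image_in; auto). subst Y'.
    set (r := mkC (c + (k + 1) * / 2) (/2)).
    assert (Hr : Helix (k + 1) c r).
    { unfold Helix, r. rewrite c2_mkC. apply c1_mkC_cong. }
    assert (Hr2 : Helix k c r).
    { apply (image_inv f); auto. apply HY. apply HY'. apply image_in; auto. }
    apply not_cong_half. unfold Helix, r in Hr, Hr2. rewrite c2_mkC in Hr2.
    pose proof (cong_trans _ _ _ (cong_sym _ _ (c1_mkC_cong _ _)) Hr2) as D.
    destruct D as [n Hn]. exists n. rewrite <- Hn. ring.
  - apply Hpq. apply Hinj. apply (helix_level_uniq m d).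
    + apply Hmd, image_in; auto.
    + apply Hmd, image_in; auto.
    + congruence.
Qed.

Lemma helix_img k c : isHelix (image f (Helix k c)).
Proof.
  destruct (geo_class _ (Hgp _ (helix_geo k c))); auto. exfalso; eapply claim1; eauto.
Qed.

Lemma claim2 y0 : ~ isHelix (image f (Circle y0)).
Proof.
  intros [k' [c' Hk]].
  destruct (helix_img 0 0) as [m [d Hmd]].
  set (p0 := mkC 0 y0).
  assert (Hp0H : Helix 0 0 p0).
  { unfold Helix, p0. rewrite c2_mkC. eapply cong_trans. apply c1_mkC_cong. apply cong_eq; ring. }
  assert (Hp0C : Circle y0 p0) by (unfold Circle, p0; rewrite c2_mkC; auto).
  destruct (Req_dec m k') as [E|E].
  - subst m.
    assert (A : Helix k' d (f p0)) by (apply Hmd, image_in; auto).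
    assert (B : Helix k' c' (f p0)) by (apply Hk, image_in; auto).
    set (r := mkC (/2) y0).
    assert (Hr : Circle y0 r) by (unfold Circle, r; rewrite c2_mkC; auto).
    assert (Hr2 : Helix 0 0 r).
    { apply (image_inv f); auto. apply Hmd. apply (helix_same k' c' d (f p0)); auto.
      apply Hk. apply image_in; auto. }
    apply not_cong_half. unfold Helix, r in Hr2. rewrite c2_mkC in Hr2.
    pose proof (cong_trans _ _ _ (cong_sym _ _ (c1_mkC_cong _ _)) Hr2) as D.
    destruct D as [n Hn]. exists n. rewrite <- Hn. ring.
  - destruct (helix_meet2 m d k' c' E) as [q1 [q2 [Hq [A1 [B1 [A2 B2]]]]]].
    apply Hmd in A1. apply Hmd in A2. apply Hk in B1. apply Hk in B2.
    destruct A1 as [a1 [Ha1 Ea1]]. destruct A2 as [a2 [Ha2 Ea2]].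
    subst q1 q2. apply image_inv in B1; auto. apply image_inv in B2; auto.
    apply Hq. f_equal. apply (helix_level_uniq 0 0); auto. unfold Circle in *. congruence.
Qed.

Lemma circ_img y0 : isCircle (image f (Circle y0)).
Proof.
  destruct (geo_class _ (Hgp _ (circle_geo y0))); auto. exfalso; eapply claim2; eauto.
Qed.

End Img.

Lemma Z_unit n m : IZR n * IZR m = 1 -> IZR n = 1 \/ IZR n = -1.
Proof.
  intro H. rewrite <- mult_IZR in H. apply eq_IZR in H.
  apply Z.eq_mul_1 in H. destruct H; subst; [left|right]; reflexivity.
Qed.

Section Main.
Variable f : Cyl -> Cyl.
Hypothesis Hinj : injf f.
Hypothesis Hsurj : forall q, exists p, f p = q.
Hypothesis Hgp : geodesic_preserving f.

Definition phi y := c2 (f (mkC 0 y)).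

Lemma circ_full y : forall p, image f (Circle y) p <-> Circle (phi y) p.
Proof.
  destruct (circ_img f Hinj Hgp y) as [Y HY].
  assert (Y = phi y).
  { unfold phi. symmetry. apply HY. apply image_in. unfold Circle; rewrite c2_mkC; auto. }
  subst; auto.
Qed.

Lemma level p : c2 (f p) = phi (c2 p).
Proof. apply circ_full. apply image_in. reflexivity. Qed.

Lemma phi_inj y y' : phi y = phi y' -> y = y'.
Proof.
  intro H. assert (A : image f (Circle y) (f (mkC 0 y'))).
  { apply circ_full. unfold Circle. rewrite level, c2_mkC. auto. }
  apply image_inv in A; [|auto]. unfold Circle in A. rewrite c2_mkC in A. auto.
Qed.

Lemma phi_surj Y : exists y, phi y = Y.
Proof. destruct (Hsurj (mkC 0 Y)) as [p Hp]. exists (c2 p). rewrite <- level, Hp. apply c2_mkC. Qed.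

Definition s0 := proj1_sig (constructive_indefinite_description _ (helix_img f Hinj Hgp 0 0)).
Lemma s0_spec : exists d0, forall p, image f (Helix 0 0) p <-> Helix s0 d0 p.
Proof. unfold s0. destruct constructive_indefinite_description; simpl; auto. Qed.

Lemma vert x : exists d', forall p, Helix 0 x p -> cong (c1 (f p)) (d' + s0 * phi (c2 p)).
Proof.
  destruct s0_spec as [d0 H0].
  destruct (helix_img f Hinj Hgp 0 x) as [m [d Hmd]].
  destruct (Req_dec m s0) as [E|E].
  - subst m. exists d. intros p Hp. rewrite <- level. apply Hmd. apply image_in; auto.
  - destruct (helix_meet2 m d s0 d0 E) as [q [_ [_ [A [B _]]]]].
    apply Hmd in A. apply H0 in B. destruct A as [a [Ha Ea]]. subst q.
    apply image_inv in B; auto.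
    exists d0. intros p Hp. rewrite <- level. apply H0. apply image_in.
    apply (helix_same 0 x 0 a); auto.
Qed.

Definition chi x := c1 (f (mkC x 0)) - s0 * phi 0.

Lemma fc1 p : cong (c1 (f p)) (chi (c1 p) + s0 * phi (c2 p)).
Proof.
  destruct (vert (c1 p)) as [d' Hd].
  assert (A := Hd p ltac:(unfold Helix; apply cong_eq; ring)).
  assert (B := Hd (mkC (c1 p) 0) ltac:(unfold Helix; rewrite c2_mkC; eapply cong_trans;
    [apply c1_mkC_cong| apply cong_eq; ring])).
  rewrite c2_mkC in B. unfold chi.
  eapply cong_trans. apply A. apply cong_sym.
  destruct B as [n Hn]. exists n. rewrite <- Hn. ring.
Qed.

Lemma chi_cong x x' : cong x x' -> chi x = chi x'.
Proof. intro H. unfold chi. rewrite (mkC_eq x 0 x' 0); auto. Qed.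

Lemma chi_inj x x' : cong (chi x) (chi x') -> cong x x'.
Proof.
  intro H. unfold chi in H.
  assert (E : f (mkC x 0) = f (mkC x' 0)).
  { apply Cyl_ext.
    - apply c1_cong_eq. destruct H as [n Hn]. exists n. rewrite <- Hn. ring.
    - rewrite !level, !c2_mkC. auto. }
  apply Hinj in E. apply (f_equal c1) in E. rewrite !c1_mkC in E.
  eapply cong_trans. apply cong_sym, frac_cong_self. rewrite E. apply frac_cong_self.
Qed.

Lemma Eeq k : exists d t, forall y, cong (chi (k * y)) (d + t * phi y).
Proof.
  destruct (helix_img f Hinj Hgp k 0) as [m [d Hmd]].
  exists d, (m - s0). intro y.
  set (p := mkC (k * y) y).
  assert (Hp : Helix k 0 p).
  { unfold Helix, p. rewrite c2_mkC. eapply cong_trans. apply c1_mkC_cong. apply cong_eq; ring. }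
  assert (A : Helix m d (f p)) by (apply Hmd, image_in; auto).
  unfold Helix in A. rewrite level in A. unfold p in A. rewrite c2_mkC in A.
  pose proof (fc1 p) as B. unfold p in B. rewrite c1_mkC, c2_mkC in B.
  rewrite (chi_cong _ (k * y)) in B by apply frac_cong_self.
  pose proof (cong_trans _ _ _ (cong_sym _ _ B) A) as C.
  destruct C as [n Hn]. exists n. rewrite <- Hn. ring.
Qed.

Lemma AP k d t : (forall y, cong (chi (k * y)) (d + t * phi y)) ->
  forall y y', cong (t * phi y) (t * phi y') <-> cong (k * y) (k * y').
Proof.
  intros H y y'. split; intro C.
  - apply chi_inj. eapply cong_trans. apply H. eapply cong_trans; [|apply cong_sym, H].
    apply cong_add; auto. apply cong_refl.
  - pose proof (cong_trans _ _ _ (cong_sym _ _ (H y)) (cong_trans _ _ _ (cong_eq _ _ (chi_cong _ _ C)) (H y'))) as D.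
    destruct D as [n Hn]. exists n. rewrite <- Hn. ring.
Qed.

Lemma t_nonzero k d t : k <> 0 -> (forall y, cong (chi (k * y)) (d + t * phi y)) -> t <> 0.
Proof.
  intros Hk H Ht. subst t. pose proof (AP k d 0 H (/ (2 * k)) 0) as A.
  apply not_cong_half. assert (C: cong (k * /(2*k)) (k*0)) by (apply A; apply cong_eq; ring).
  replace (k * /(2*k)) with (/2) in C by (field; auto). replace (k*0) with 0 in C by ring. exact C.
Qed.

Lemma jensen y0 h : phi (y0 + h) + phi (y0 - h) = 2 * phi y0.
Proof.
  destruct (Req_dec h 0) as [Hh|Hh].
  { subst. replace (y0 + 0) with y0 by ring. replace (y0 - 0) with y0 by ring. ring. }
  set (k := / h).
  assert (Hk : k <> 0) by (apply Rinv_neq_0_compat; auto).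
  destruct (Eeq k) as [d [t Ht]].
  assert (Ht0 : t <> 0) by (eapply t_nonzero; eauto).
  assert (Lw : forall w, (t * (phi w - phi y0) = 1 \/ t * (phi w - phi y0) = -1) ->
             w = y0 + h \/ w = y0 - h).
  { intros w Hw.
    assert (C1 : cong (t * phi w) (t * phi y0)).
    { destruct Hw as [Hw|Hw]; [exists 1%Z|exists (-1)%Z]; simpl; lra. }
    apply (AP k d t Ht) in C1. destruct C1 as [n Hn].
    assert (Hn0 : IZR n <> 0).
    { intro E. rewrite E in Hn. assert (w = y0).
      { apply (Rmult_eq_reg_l k); auto. lra. }
      subst w. destruct Hw; lra. }
    set (k' := k / IZR n).
    assert (Hk' : k' <> 0) by (unfold k'; intro; apply Hk; apply (Rmult_eq_reg_r (/ IZR n));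
      [lra| apply Rinv_neq_0_compat; auto]).
    destruct (Eeq k') as [d' [t' Ht']].
    assert (C2 : cong (k' * w) (k' * y0)).
    { exists 1%Z. simpl. unfold k'. replace (k / IZR n * w - k / IZR n * y0) with ((k * w - k * y0) / IZR n) by (field; auto).
      rewrite Hn. field. auto. }
    apply (AP k' d' t' Ht') in C2. destruct C2 as [j Hj].
    assert (C3 : cong (k * (y0 + h)) (k * y0)).
    { exists 1%Z. unfold k. simpl. field. auto. }
    apply (AP k d t Ht) in C3. destruct C3 as [i Hi].
    assert (Hs : exists sg, (sg = 1 \/ sg = -1) /\ t * (phi w - phi y0) = sg).
    { destruct Hw; eauto. }
    destruct Hs as [sg [Hsg Hsg']].
    assert (Ht'e : t' = IZR j * sg * t).
    { replace (t' * phi w - t' * phi y0) with (t' * (phi w - phi y0)) in Hj by ring.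
      assert (phi w - phi y0 = sg / t) by (rewrite <- Hsg'; field; auto).
      rewrite H in Hj. rewrite <- Hj. destruct Hsg; subst sg; field; auto. }
    assert (C4 : cong (t' * phi (y0 + h)) (t' * phi y0)).
    { destruct Hsg; subst sg.
      - exists (j * i)%Z. rewrite mult_IZR. rewrite Ht'e. rewrite <- Hi. ring.
      - exists (- (j * i))%Z. rewrite opp_IZR, mult_IZR. rewrite Ht'e. rewrite <- Hi. ring. }
    apply (AP k' d' t' Ht') in C4. destruct C4 as [m Hm].
    assert (Hnm : IZR n * IZR m = 1).
    { rewrite <- Hm. unfold k', k. field. split; auto. }
    assert (Hwn : w = y0 + IZR n * h).
    { assert (k * (w - y0) = IZR n) by (rewrite <- Hn; ring).
      unfold k in H. apply (Rmult_eq_reg_l (/ h)). rewrite <- H. field. auto.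
      apply Rinv_neq_0_compat; auto. }
    destruct (Z_unit _ _ Hnm) as [E|E]; rewrite E in Hwn; [left|right]; lra. }
  destruct (phi_surj (phi y0 + / t)) as [w1 Hw1].
  destruct (phi_surj (phi y0 - / t)) as [w2 Hw2].
  assert (A1 := Lw w1 ltac:(left; rewrite Hw1; field; auto)).
  assert (A2 := Lw w2 ltac:(right; rewrite Hw2; field; auto)).
  assert (Hit : / t <> 0) by (apply Rinv_neq_0_compat; auto).
  destruct A1 as [E1|E1]; destruct A2 as [E2|E2]; subst w1 w2.
  - rewrite Hw1 in Hw2. lra.
  - rewrite Hw1, Hw2. ring.
  - rewrite Hw1, Hw2. ring.
  - rewrite Hw1 in Hw2. lra.
Qed.

End Main.

Lemma addZ_zero (G : R -> R) : (forall a b, G (a + b) = G a + G b) ->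
  (forall y, exists n, G y = IZR n) -> forall y, G y = 0.
Proof.
  intros Hadd Hint y.
  assert (G0 : G 0 = 0) by (pose proof (Hadd 0 0) as H; rewrite Rplus_0_r in H; lra).
  assert (Gn : forall n x, G (INR n * x) = INR n * G x).
  { induction n; intro x. simpl. rewrite Rmult_0_l, G0; ring.
    rewrite S_INR. replace ((INR n + 1) * x) with (INR n * x + x) by ring.
    rewrite Hadd, IHn. ring. }
  destruct (Hint y) as [z Hz]. destruct (Z.eq_dec z 0) as [->|Hz0]; auto.
  exfalso. set (N := (Z.to_nat (Z.abs z) + 1)%nat).
  assert (HN : INR N <> 0) by (unfold N; rewrite plus_INR; simpl; pose proof (pos_INR (Z.to_nat (Z.abs z))); lra).
  destruct (Hint (y / INR N)) as [m Hm].
  pose proof (Gn N (y / INR N)) as E. replace (INR N * (y / INR N)) with y in E by (field; auto).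
  rewrite Hz, Hm, INR_IZR_INZ, <- mult_IZR in E. apply eq_IZR in E.
  assert (Z.of_nat N = Z.abs z + 1)%Z by (unfold N; rewrite Nat2Z.inj_add, Z2Nat.id; lia).
  rewrite H in E. destruct (Z.abs_spec z) as [[? Ha]|[? Ha]]; rewrite Ha in E; destruct (Z.lt_trichotomy m 0) as [Hm0|[Hm0|Hm0]]; try (subst; lia); nia.
Qed.

Lemma ring_hom_id (A : R -> R) : (forall a b, A (a + b) = A a + A b) ->
  (forall a b, A (a * b) = A a * A b) -> A 1 = 1 -> forall x, A x = x.
Proof.
  intros Ha Hm H1.
  assert (A0 : A 0 = 0) by (pose proof (Ha 0 0) as H; rewrite Rplus_0_r in H; lra).
  assert (Aopp : forall x, A (- x) = - A x).
  { intro x. pose proof (Ha x (- x)) as H. rewrite Rplus_opp_r, A0 in H. lra. }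
  assert (Apos : forall x, 0 <= x -> 0 <= A x).
  { intros x Hx. rewrite <- (sqrt_sqrt x Hx). rewrite Hm. apply Rle_0_sqr. }
  assert (Amono : forall a b, a <= b -> A a <= A b).
  { intros a b Hab. replace b with (a + (b - a)) by ring. rewrite Ha.
    pose proof (Apos (b - a) ltac:(lra)). lra. }
  assert (Anat : forall n, A (INR n) = INR n).
  { induction n. simpl; auto. rewrite S_INR, Ha, IHn, H1. auto. }
  assert (Aint : forall z, A (IZR z) = IZR z).
  { intro z. destruct z as [|p|p]. simpl; auto.
    - rewrite <- positive_nat_Z, <- INR_IZR_INZ. apply Anat.
    - replace (IZR (Z.neg p)) with (- IZR (Z.pos p)) by (rewrite <- opp_IZR; reflexivity).
      rewrite Aopp. rewrite <- positive_nat_Z, <- INR_IZR_INZ, Anat. auto. }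
  intro x.
  assert (Bd : forall z, (0 < z)%Z -> Rabs (IZR z * A x - IZR z * x) <= 1).
  { intros z Hz. set (m := Int_part (IZR z * x)).
    destruct (base_Int_part (IZR z * x)) as [B1 B2]. fold m in B1, B2.
    pose proof (Amono _ _ B1) as M1. rewrite Aint, Hm, Aint in M1.
    assert (IZR z * x <= IZR m + 1) by lra.
    pose proof (Amono _ _ H) as M2. rewrite Ha, Aint, H1, Hm, Aint in M2.
    apply Rabs_le. lra. }
  destruct (Req_dec (A x) x) as [E|E]; auto. exfalso.
  set (d := Rabs (A x - x)).
  assert (Hd : 0 < d) by (apply Rabs_pos_lt; lra).
  destruct (archimed (/ d)) as [U1 U2].
  assert (Hz : (0 < up (/ d))%Z).
  { apply lt_IZR. pose proof (Rinv_0_lt_compat d Hd). simpl. lra. }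
  pose proof (Bd _ Hz) as B. replace (IZR (up (/ d)) * A x - IZR (up (/ d)) * x) with
    (IZR (up (/ d)) * (A x - x)) in B by ring.
  rewrite Rabs_mult, (Rabs_right (IZR _)) in B by (apply Rle_ge, IZR_le; lia).
  fold d in B.
  assert (/ d * d = 1) by (field; lra).
  nra.
Qed.

Lemma Z_unit' n : (exists m, / IZR n = IZR m) -> IZR n <> 0 -> IZR n = 1 \/ IZR n = -1.
Proof.
  intros [m Hm] H. apply (Z_unit n m). rewrite <- Hm. field. auto.
Qed.

Section Main2.
Variable f : Cyl -> Cyl.
Hypothesis Hinj : injf f.
Hypothesis Hsurj : forall q, exists p, f p = q.
Hypothesis Hgp : geodesic_preserving f.

Notation phi := (phi f).
Notation chi := (chi f Hinj Hgp).
Notation s0 := (s0 f Hinj Hgp).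

Definition B y := phi y - phi 0.

Lemma B_add a b : B (a + b) = B a + B b.
Proof.
  unfold B.
  pose proof (jensen f Hinj Hsurj Hgp ((a + b) / 2) ((a - b) / 2)) as J1.
  pose proof (jensen f Hinj Hsurj Hgp ((a + b) / 2) ((a + b) / 2)) as J2.
  replace ((a + b) / 2 + (a - b) / 2) with a in J1 by field.
  replace ((a + b) / 2 - (a - b) / 2) with b in J1 by field.
  replace ((a + b) / 2 + (a + b) / 2) with (a + b) in J2 by field.
  replace ((a + b) / 2 - (a + b) / 2) with 0 in J2 by field.
  lra.
Qed.

Lemma chi_lin k d t : (forall y, cong (chi (k * y)) (d + t * phi y)) ->
  forall y, cong (chi (k * y) - chi 0) (t * B y).
Proof.
  intros H y. pose proof (H y) as A. pose proof (H 0) as C. rewrite Rmult_0_r in C.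
  pose proof (cong_sub _ _ _ _ A C) as D. unfold B.
  destruct D as [n Hn]; exists n; rewrite <- Hn; ring.
Qed.

Lemma phi_affine : exists a, a <> 0 /\ forall y, phi y = phi 0 + a * y /\
  exists t1, t1 <> 0 /\ forall y, cong (chi y - chi 0) (t1 * a * y).
Proof.
  destruct (Eeq f Hinj Hgp 1) as [d1 [t1 H1]].
  assert (Ht1 : t1 <> 0) by (eapply (t_nonzero f Hinj Hgp 1); eauto; lra).
  assert (HB1 : B 1 <> 0).
  { unfold B. intro E. assert (1 = 0) by (apply (phi_inj f Hinj Hgp); lra). lra. }
  assert (Hmul : forall k y, B (k * y) = B k * B y / B 1).
  { intros k y. destruct (Eeq f Hinj Hgp k) as [dk [tk Hk]].
    assert (G : forall y, t1 * B (k * y) - tk * B y = 0).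
    { apply (addZ_zero (fun y => t1 * B (k * y) - tk * B y)).
      - intros a b. rewrite Rmult_plus_distr_l, !B_add. ring.
      - intro y'. pose proof (chi_lin _ _ _ Hk y') as A.
        pose proof (chi_lin _ _ _ H1 (k * y')) as C. rewrite Rmult_1_l in C.
        pose proof (cong_trans _ _ _ (cong_sym _ _ C) A) as [n Hn].
        exists n. exact Hn. }
    pose proof (G 1) as G1. rewrite Rmult_1_r in G1.
    pose proof (G y) as Gy.
    assert (tk = t1 * B k / B 1) by (field_simplify_eq; auto; lra).
    subst tk. apply (Rmult_eq_reg_l t1); auto.
    replace (t1 * (B k * B y / B 1)) with (t1 * B k / B 1 * B y) by (field; auto). lra. }
  set (A := fun y => B y / B 1).
  assert (HA : forall x, A x = x).
  { apply ring_hom_id.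
    - intros a b. unfold A. rewrite B_add. field. auto.
    - intros a b. unfold A. rewrite Hmul. field. auto.
    - unfold A. field. auto. }
  exists (B 1). split; auto. intro y. split.
  - pose proof (HA y) as E. unfold A in E.
    assert (B y = B 1 * y) by (rewrite <- E at 2; field; auto). unfold B in H at 1. lra.
  - exists t1. split; auto. intro y'. pose proof (chi_lin _ _ _ H1 y') as C.
    rewrite Rmult_1_l in C. pose proof (HA y') as E. unfold A in E.
    replace (t1 * B 1 * y') with (t1 * B y'); auto.
    rewrite <- E at 2. field. auto.
Qed.

End Main2.

Lemma sign_int f (Hinj : injf f) (Hsurj : forall q, exists p, f p = q) (Hgp : geodesic_preserving f) :
  exists N : R, (N = 1 \/ N = -1) /\ exists a, a <> 0 /\
  (forall y, phi f y = phi f 0 + a * y) /\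
  forall x, cong (chi f Hinj Hgp x - chi f Hinj Hgp 0) (N * x).
Proof.
  destruct (phi_affine f Hinj Hsurj Hgp) as [a [Ha Hy]].
  destruct (Hy 0) as [_ [t1 [Ht1 Hc]]].
  assert (C1 := Hc 1). rewrite (chi_cong f Hinj Hgp 1 0) in C1 by (exists 1%Z; simpl; ring).
  apply cong_sym in C1.
  destruct C1 as [z Hz]. rewrite Rminus_diag, Rmult_1_r, Rminus_0_r in Hz.
  exists (t1 * a).
  split.
  - destruct (Req_dec (IZR z) 0) as [E|E].
    + exfalso. apply not_cong_half. apply (chi_inj f Hinj Hgp).
      pose proof (Hc (/2)) as C. rewrite Hz, E in C.
      destruct C as [n Hn]. exists n. rewrite <- Hn. ring.
    + assert (Hinv : exists m, / IZR z = IZR m).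
      { pose proof (Hc (/ IZR z)) as C. rewrite Hz in C.
        assert (C' : cong (chi f Hinj Hgp (/ IZR z)) (chi f Hinj Hgp 0)).
        { destruct C as [n Hn]. exists (n + 1)%Z. rewrite plus_IZR.
          replace (IZR z * / IZR z) with 1 in Hn by (field; auto). simpl. lra. }
        apply (chi_inj f Hinj Hgp) in C'.
        destruct C' as [n Hn]. exists n. rewrite <- Hn. ring. }
      rewrite Hz. apply (Z_unit' _ Hinv E).
  - exists a. split; auto. split.
    + intro y. destruct (Hy y); auto.
    + exact Hc.
Qed.

Theorem theorem4p1 (f : Cyl -> Cyl) :
  bijectiveC f -> geodesic_preserving f ->
  exists (g : Cyl -> Cyl) (a b alpha : R),
    isometryC g /\ a <> 0 /\
    forall p : Cyl, f p = g (affineC a b (twist alpha p)).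
Proof.
  intros [f' [Hf1 Hf2]] Hgp.
  assert (Hinj : injf f) by (intros x y E; rewrite <- (Hf1 x), <- (Hf1 y), E; auto).
  assert (Hsurj : forall q, exists p, f p = q) by (intro q; exists (f' q); auto).
  destruct (sign_int f Hinj Hsurj Hgp) as [N [HN [a [Ha [Hphi Hchi]]]]].
  set (s := s0 f Hinj Hgp).
  set (K := chi f Hinj Hgp 0 + s * phi f 0).
  assert (HNN : N * N = 1) by (destruct HN; subst; ring).
  assert (HNz : exists z, N = IZR z) by (destruct HN; subst; [exists 1%Z|exists (-1)%Z]; reflexivity).
  destruct HNz as [z Hz]. subst N.
  set (N := IZR z) in *.
  assert (Hform : forall p, f p = mkC (K + N * c1 p + s * a * c2 p) (phi f 0 + a * c2 p)).
  { intro p. apply eq_mkC.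
    - eapply cong_trans. apply (fc1 f Hinj Hgp p). fold s. rewrite Hphi.
      pose proof (Hchi (c1 p)) as C. destruct C as [n Hn]. exists n. unfold K. rewrite <- Hn. ring.
    - rewrite (level f Hinj Hgp). apply Hphi. }
  set (g := fun q => mkC (K + N * c1 q) (c2 q)).
  exists g, a, (phi f 0), (N * s * a).
  split; [|split; auto].
  - split.
    + exists (fun q => mkC (N * (c1 q - K)) (c2 q)). split; intro q; unfold g.
      * symmetry. apply eq_mkC; rewrite ?c1_mkC, ?c2_mkC; auto.
        pose proof (frac_cong_self (K + N * c1 q)) as C.
        apply cong_sym. eapply cong_trans.
        { apply cong_zmul. apply cong_sub. apply C. apply cong_refl. }
        apply cong_eq. unfold N in *.
        first [ transitivity (IZR z * IZR z * c1 q); [ring| rewrite HNN; ring]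
              | symmetry; transitivity (IZR z * IZR z * c1 q); [ring| rewrite HNN; ring]].
      * symmetry. apply eq_mkC; rewrite ?c1_mkC, ?c2_mkC; auto.
        pose proof (frac_cong_self (N * (c1 q - K))) as C.
        apply cong_sym. eapply cong_trans.
        { apply cong_add. apply cong_refl. apply cong_zmul. apply C. }
        apply cong_eq. unfold N in *.
        first [ transitivity (K + IZR z * IZR z * (c1 q - K)); [ring| rewrite HNN; ring]
              | symmetry; transitivity (K + IZR z * IZR z * (c1 q - K)); [ring| rewrite HNN; ring]].
    + intros p q. rewrite !distC_rep. unfold g. rewrite !c1_mkC, !c2_mkC.
      f_equal. f_equal.
      assert (C : cong (frac_part (K + N * c1 p) - frac_part (K + N * c1 q)) (N * (c1 p - c1 q))).
      { eapply cong_trans. apply cong_sub; apply frac_cong_self. apply cong_eq; ring. }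
      rewrite (rep_cong _ _ C). rewrite <- (pow2_abs (rep (N * _))), <- (pow2_abs (rep (c1 p - _))).
      f_equal. destruct HN as [E|E]; rewrite E.
      * rewrite Rmult_1_l; auto.
      * replace (-1 * (c1 p - c1 q)) with (- (c1 p - c1 q)) by ring. apply Rabs_rep_opp.
  - intro p. rewrite Hform. unfold g, affineC, twist. rewrite !c1_mkC, !c2_mkC.
    apply mkC_eq; [|ring].
    rewrite frac_of_01 by apply frac_range.
    pose proof (frac_cong_self (c1 p + N * s * a * c2 p)) as C.
    apply cong_sym. eapply cong_trans.
    { apply cong_add. apply cong_refl. apply cong_zmul. apply C. }
    apply cong_eq.
    unfold N in *.
    first [ transitivity (K + IZR z * c1 p + IZR z * IZR z * s * a * c2 p); [ring| rewrite HNN; ring]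
          | symmetry; transitivity (K + IZR z * c1 p + IZR z * IZR z * s * a * c2 p); [ring| rewrite HNN; ring]].
Qed.
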